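(* Let $X=[-1,1]\times\mathbb{R}$ with the Lorentzian metric $g=-dt^2+ds^2$. Equip $X$ with the metric \[ d_{\mathrm N}(x,y)=\operatorname*{ess\,sup}_{z\in X}\big|\,|\sigma(x,z)|-|\sigma(y,z)|\,\big|. \] Then no continuous curve $c\colon[0,1]\to X$ with $x_2(c(0))\neq x_2(c(1))$ is $d_{\mathrm N}$-rectifiable.
   Context: The signed Lorentzian distance $\sigma$ of $g$ is defined as follows, with the supremum taken over causal curves $c$ from $x$ to $y$ and $l(c)=\int\sqrt{-g(c',c')}$: \begin{itemize} \item $\sigma(x,y)=\sup l(c)$ if $y$ lies in the causal future of $x$; \item $\sigma(x,y)=-\sup l(c)$ if $y$ lies in the causal past of $x$; \item $\sigma(x,y)=0$ otherwise. \end{itemize} The essential supremum is with respect to Lebesgue measure. $x_2$ denotes the second coordinate $s$. A curve is $d_{\mathrm N}$-rectifiable if $\sup\sum_i d_{\mathrm N}(c(t_{i-1}),c(t_i))<\infty$, the supremum being over all finite partitions $0=t_0<\dots<t_N=1$. *)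

(* Defs.v *)
From HB Require Import structures.
From mathcomp Require Import all_boot all_order all_algebra.
From mathcomp Require Import all_classical all_reals all_analysis.
Set Implicit Arguments. Unset Strict Implicit. Unset Printing Implicit Defensive.
Import Order.TTheory GRing.Theory Num.Theory.
Import numFieldNormedType.Exports.
Local Open Scope classical_set_scope.
Local Open Scope ring_scope.

Section Strip.
Variable R : realType.

(* Points are pairs (t, s); X = [-1,1] x R. *)
Definition Xset : set (R * R) := [set p | -1 <= p.1 <= 1].

(* A C^1 causal curve [0,1] -> X from x to y, given by its two components.
   [fut = true]: future-directed (|s'| <= t'); [fut = false]: past-directed
   (|s'| <= -t'). *)
Definition causal_curve (fut : bool) (x y : R * R) (ct cs : R -> R) : Prop :=
  [/\ (forall u : R, derivable ct u 1 /\ derivable cs u 1),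
      continuous ((derive1 ct)) /\ continuous ((derive1 cs)),
      (forall u : R, 0 <= u <= 1 -> Xset (ct u, cs u)),
      (ct 0, cs 0) = x /\ (ct 1, cs 1) = y &
      (forall u : R, 0 <= u <= 1 ->
         `|(derive1 cs) u| <= (if fut then (derive1 ct) u else - (derive1 ct) u))].

Definition lor_length (ct cs : R -> R) : \bar R :=
  (\int[lebesgue_measure]_(u in `[0%R, 1%R]%classic)
     (Num.sqrt ((derive1 ct) u ^+ 2 - (derive1 cs) u ^+ 2))%:E)%E.

Definition causal_lengths (fut : bool) (x y : R * R) : set (\bar R) :=
  [set l | exists ct cs, causal_curve fut x y ct cs /\ l = lor_length ct cs].

Definition Jplus (x y : R * R) : Prop := exists ct cs, causal_curve true x y ct cs.
Definition Jminus (x y : R * R) : Prop := exists ct cs, causal_curve false x y ct cs.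

Definition sigma (x y : R * R) : \bar R :=
  if `[< Jplus x y >] then ereal_sup (causal_lengths true x y)
  else if `[< Jminus x y >] then (- ereal_sup (causal_lengths false x y))%E
  else 0%E.

Definition leb2 := ((@lebesgue_measure R) \x (@lebesgue_measure R))%E.

Definition ess_sup_X (f : R * R -> \bar R) : \bar R :=
  ereal_inf [set M | (\forall z \ae leb2, Xset z -> (f z <= M)%E)].

Definition dN (x y : R * R) : \bar R :=
  ess_sup_X (fun z => `| `|sigma x z| - `|sigma y z| |%E).

Definition dN_rectifiable (c : R -> R * R) : Prop :=
  exists M : R, forall (n : nat) (t : nat -> R),
    t 0%N = 0 -> t n = 1 -> (forall i, (i < n)%N -> t i < t i.+1) ->
    (\sum_(i < n) dN (c (t i)) (c (t i.+1)) <= M%:E)%E.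

End Strip.

(* Main.v *)
Require Import Defs.
From HB Require Import structures.
From mathcomp Require Import all_boot all_order all_algebra.
From mathcomp Require Import all_classical all_reals all_analysis.
Import Order.TTheory GRing.Theory Num.Theory.
Import numFieldNormedType.Exports.
Local Open Scope classical_set_scope.
Local Open Scope ring_scope.
From mathcomp Require Import lra ring zify.

Section S.
Variable R : realType.


Lemma box_ess (f : R * R -> \bar R) (tc sc r L : R) : 0 < r ->
  -1 <= tc - r -> tc + r <= 1 ->
  (forall z : R * R, `|z.1 - tc| < r -> `|z.2 - sc| < r -> (L%:E <= f z)%E) ->
  (L%:E <= ess_sup_X f)%E.
Proof.
move=> r0 h1 h2 hf.
apply: le_ereal_inf_tmp => M /= hM.
rewrite leNgt; apply/negP => ML.
move: hM => [N [mN N0 sN]].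
set B := `]tc - r, tc + r[%classic `*` `]sc - r, sc + r[%classic.
have BN : B `<=` N.
  move=> z [/= z1 z2]; apply: sN => /=.
  rewrite !in_itv /= in z1 z2; case/andP: z1 => a1 b1; case/andP: z2 => a2 b2.
  have Xz : Xset z by rewrite /Xset /=; apply/andP; split; lra.
  move=> /(_ Xz) fM.
  have hz : (L%:E <= f z)%E by apply: hf; rewrite ltr_distl; apply/andP; split; lra.
  by have := le_lt_trans hz (le_lt_trans fM ML); rewrite ltxx.
have : (leb2 B <= leb2 N)%E.
  apply: le_measure => //; rewrite ?inE //.
  by apply: measurableX => //.
rewrite N0 /leb2 product_measure1E //= !lebesgue_measure_itv /=.
rewrite !lte_fin !ltrD2l gt0_cp //= -!EFinD -EFinM lee_fin.
apply/negP; rewrite -ltNge; apply: mulr_gt0; lra.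
Qed.


Lemma line_der (a b u : R) : is_derive u 1 (fun v : R => a + b * v) b.
Proof.
apply: is_derive_eq.
by rewrite add0r mul1r /GRing.scale /= mulr1.
Qed.

Lemma line_derive1 (a b : R) : derive1 (fun v : R => a + b * v) = fun _ => b.
Proof. by apply/funext => u; rewrite derive1E (@derive_val _ _ _ _ _ _ _ (line_der a b u)). Qed.

Lemma line_derivable (a b u : R) : derivable (fun v : R => a + b * v) u 1.
Proof. by have := line_der a b u => -[]. Qed.


Lemma line_causal fut (x z : R * R) : Xset x -> Xset z ->
  `|z.2 - x.2| <= (if fut then z.1 - x.1 else x.1 - z.1) ->
  causal_curve fut x z (fun v => x.1 + (z.1 - x.1) * v) (fun v => x.2 + (z.2 - x.2) * v).
Proof.
case: x => x1 x2; case: z => z1 z2; rewrite /Xset /= => /andP[hx1 hx2] /andP[hz1 hz2] hc.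
split.
- by move=> u; split; apply: line_derivable.
- by rewrite !line_derive1; split; apply: cst_continuous.
- move=> u /andP[u0 u1]; rewrite /Xset /=; apply/andP; split; nra.
- by rewrite !mulr0 !mulr1 !addr0; split; congr pair; ring.
- by move=> u _; rewrite !line_derive1 opprB.
Qed.

Lemma line_length (x z : R * R) :
  lor_length (fun v => x.1 + (z.1 - x.1) * v) (fun v => x.2 + (z.2 - x.2) * v) =
  (Num.sqrt ((z.1 - x.1) ^+ 2 - (z.2 - x.2) ^+ 2))%:E.
Proof.
rewrite /lor_length !line_derive1.
have -> : (fun _ : R => (Num.sqrt ((z.1 - x.1) ^+ 2 - (z.2 - x.2) ^+ 2))%:E) =
   cst (Num.sqrt ((z.1 - x.1) ^+ 2 - (z.2 - x.2) ^+ 2))%:E by [].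
rewrite integral_cst //= lebesgue_measure_itv /= lte01 -EFinB subr0.
by rewrite -EFinM mulr1.
Qed.

Lemma causal_mono fut (x y : R * R) ct cs : causal_curve fut x y ct cs ->
  `|y.2 - x.2| <= (if fut then y.1 - x.1 else x.1 - y.1).
Proof.
case=> hd [hc1 hc2] _ [hx hy] hder.
have key : forall a b : R, (forall u, 0 <= u <= 1 -> 0 <= a * derive1 ct u + b * derive1 cs u) ->
    a * ct 0 + b * cs 0 <= a * ct 1 + b * cs 1.
  move=> a b hab.
  pose F := (a \*: ct + b \*: cs).
  have D : forall u, derivable F u 1.
    move=> u; apply: derivableD.
      exact: (@derivableZ _ _ _ ct a u 1 (proj1 (hd u))).
    exact: (@derivableZ _ _ _ cs b u 1 (proj2 (hd u))).
  have E : forall u, derive1 F u = a * derive1 ct u + b * derive1 cs u.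
    move=> u; rewrite derive1E deriveD; last 2 first.
      exact: (@derivableZ _ _ _ ct a u 1 (proj1 (hd u))).
      exact: (@derivableZ _ _ _ cs b u 1 (proj2 (hd u))).
    rewrite !deriveZ; try by [apply: (proj1 (hd u)) | apply: (proj2 (hd u))].
    by rewrite !derive1E.
  have := (@ger0_derive1_ndecr _ F 0 1).
  move=> /(_ _ _ _ 0 1) H; apply: H.
  - move=> u _; exact: D.
  - move=> u; rewrite in_itv /= => /andP[u0 u1]; rewrite E; apply: hab.
    by apply/andP; split; apply: ltW.
  - by apply: derivable_within_continuous => u _; exact: D.
  - by [].
  - exact: ler01.
  - by [].
have [hx1 hx2] : ct 0 = x.1 /\ cs 0 = x.2 by rewrite -hx.
have [hy1 hy2] : ct 1 = y.1 /\ cs 1 = y.2 by rewrite -hy.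
case: fut hder => hder.
  have h1 := key 1 1; have h2 := key 1 (-1).
  have /h1 : forall u, 0 <= u <= 1 -> 0 <= 1 * derive1 ct u + 1 * derive1 cs u.
    by move=> u /hder; rewrite !mul1r ler_norml; lra.
  have /h2 : forall u, 0 <= u <= 1 -> 0 <= 1 * derive1 ct u + -1 * derive1 cs u.
    by move=> u /hder; rewrite !mul1r ler_norml; lra.
  rewrite hx1 hx2 hy1 hy2 ler_norml; lra.
have h1 := key (-1) 1; have h2 := key (-1) (-1).
have /h1 : forall u, 0 <= u <= 1 -> 0 <= -1 * derive1 ct u + 1 * derive1 cs u.
  by move=> u /hder; rewrite ler_norml; lra.
have /h2 : forall u, 0 <= u <= 1 -> 0 <= -1 * derive1 ct u + -1 * derive1 cs u.
  by move=> u /hder; rewrite ler_norml; lra.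
rewrite hx1 hx2 hy1 hy2 ler_norml; lra.
Qed.

Lemma sigma_spacelike (x z : R * R) : (z.1 - x.1) ^+ 2 < (z.2 - x.2) ^+ 2 -> sigma x z = 0%E.
Proof.
move=> h; rewrite /sigma asboolF; last first.
  move=> [ct [cs /causal_mono /=]]; rewrite ler_norml => /andP[h1 h2]; nra.
rewrite asboolF //.
move=> [ct [cs /causal_mono /=]]; rewrite ler_norml => /andP[h1 h2]; nra.
Qed.

Lemma sigma_timelike (x z : R * R) : Xset x -> Xset z ->
  (z.2 - x.2) ^+ 2 < (z.1 - x.1) ^+ 2 ->
  ((Num.sqrt ((z.1 - x.1) ^+ 2 - (z.2 - x.2) ^+ 2))%:E <= `|sigma x z|)%E.
Proof.
move=> Xx Xz h.
have sq0 : (0 <= (Num.sqrt ((z.1 - x.1) ^+ 2 - (z.2 - x.2) ^+ 2))%:E)%E.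
  by rewrite lee_fin sqrtr_ge0.
have [tpos|tneg] := ltP 0 (z.1 - x.1).
  have hc : `|z.2 - x.2| <= (if true then z.1 - x.1 else x.1 - z.1).
    by rewrite /= ler_norml; apply/andP; split; nra.
  have C := line_causal true x z Xx Xz hc.
  rewrite /sigma asboolT; last by exists (fun v => x.1 + (z.1 - x.1) * v), (fun v => x.2 + (z.2 - x.2) * v).
  apply: (le_trans _ (lee_abs _)).
  apply: ereal_sup_ubound; exists (fun v => x.1 + (z.1 - x.1) * v), (fun v => x.2 + (z.2 - x.2) * v).
  by split => //; rewrite line_length.
have hc : `|z.2 - x.2| <= (if false then z.1 - x.1 else x.1 - z.1).
  by rewrite /= ler_norml; apply/andP; split; nra.
have C := line_causal false x z Xx Xz hc.
rewrite /sigma asboolF; last first.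
  move=> [ct [cs /causal_mono /=]]; rewrite ler_norml => /andP[h1 h2]; nra.
rewrite asboolT; last by exists (fun v => x.1 + (z.1 - x.1) * v), (fun v => x.2 + (z.2 - x.2) * v).
rewrite abseN; apply: (le_trans _ (lee_abs _)).
apply: ereal_sup_ubound; exists (fun v => x.1 + (z.1 - x.1) * v), (fun v => x.2 + (z.2 - x.2) * v).
by split => //; rewrite line_length.
Qed.


Definition spc (a b : R) := a ^+ 2 < b ^+ 2.
Definition tml (a b lam : R) := b ^+ 2 < a ^+ 2 /\ lam <= a ^+ 2 - b ^+ 2.

Lemma spc_of (a b : R) : (a + b) * (a - b) < 0 -> spc a b.
Proof. by rewrite /spc => h; rewrite -subr_lt0 (_ : _ - _ = (a + b) * (a - b)) //; ring. Qed.

Lemma tml_of (a b lam : R) : 0 < lam -> lam <= (a + b) * (a - b) -> tml a b lam.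
Proof.
rewrite /tml (_ : a ^+ 2 - b ^+ 2 = (a + b) * (a - b)); last by ring.
move=> l0 h; split => //; rewrite -subr_gt0 (_ : _ - _ = (a + b) * (a - b)); last by ring.
exact: lt_le_trans l0 h.
Qed.

Definition good (t1 p t2 q lam tc sc r : R) :=
  [/\ 0 < r, -1 <= tc - r, tc + r <= 1 &
  forall zt zs, `|zt - tc| < r -> `|zs - sc| < r ->
    (spc (zt - t1) (zs - p) /\ tml (zt - t2) (zs - q) lam) \/
    (spc (zt - t2) (zs - q) /\ tml (zt - t1) (zs - p) lam)].

Lemma core (t1 p t2 q m : R) : -1 <= t1 <= 0 -> -1 <= t2 <= 1 ->
  0 < q - p <= 1/64 -> 0 < m -> m <= (q - p) / 16 -> m <= 1/64 ->
  exists tc sc r, good t1 p t2 q m tc sc r.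
Proof.
move=> /andP[a1 a2] /andP[b1 b2] /andP[d0 d1] m0 m1 m2.
have hd : True by [].
have [far|close] := leP (1/4) `|t2 - t1|.
  exists (t1 + 1/64), (p - 3/64), (1/64); split; try lra.
  move=> zt zs; rewrite !ltr_distl => /andP[h1 h2] /andP[h3 h4]; left; split.
    apply: spc_of; nra.
  apply: tml_of => //.
  apply: (le_trans m2).
  move: far; rewrite ler_normr => /orP[] far.
    have hA : 1/4 <= - (zt - t2 + (zs - q)) by lra.
    have hB : 1/8 <= - (zt - t2 - (zs - q)) by lra.
    have := ler_pM (_ : 0 <= 1/4) (_ : 0 <= 1/8) hA hB; nra.
  have hA : 1/8 <= zt - t2 + (zs - q) by lra.
  have hB : 1/4 <= zt - t2 - (zs - q) by lra.
  have := ler_pM (_ : 0 <= 1/8) (_ : 0 <= 1/4) hA hB; nra.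
have [tpos|tneg] := leP 0 (t2 - t1).
  exists (t1 + 3 * (q - p) / 16 + 1/4), (p + 3 * (q - p) / 16 - 1/4), ((q - p) / 16); split; try lra.
  move=> zt zs; rewrite !ltr_distl => /andP[h1 h2] /andP[h3 h4]; right; split.
    apply: spc_of; move: close; rewrite ltr_norml => /andP[c1 c2].
    have hA : zt - t2 + (zs - q) < 0 by lra.
    have hB : 0 < zt - t2 - (zs - q) by lra.
    by rewrite nmulr_rlt0.
  apply: tml_of => //.
  have hA : (q - p) / 4 <= zt - t1 + (zs - p) by lra.
  have hB : 1/4 <= zt - t1 - (zs - p) by lra.
  have := ler_pM (_ : 0 <= (q - p) / 4) (_ : 0 <= 1/4) hA hB; nra.
exists (t2 + 1/4 + 3 * (q - p) / 16), (q + 1/4 - 3 * (q - p) / 16), ((q - p) / 16); split; try lra.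
move=> zt zs; rewrite !ltr_distl => /andP[h1 h2] /andP[h3 h4]; left; split.
  apply: spc_of; move: close; rewrite ltr_norml => /andP[c1 c2].
  have hA : 0 < zt - t1 + (zs - p) by lra.
  have hB : zt - t1 - (zs - p) < 0 by lra.
  by rewrite pmulr_rlt0.
apply: tml_of => //.
have hA : 1/4 <= zt - t2 + (zs - q) by lra.
have hB : (q - p) / 4 <= zt - t2 - (zs - q) by lra.
have := ler_pM (_ : 0 <= 1/4) (_ : 0 <= (q - p) / 4) hA hB; nra.
Qed.

End S.

Arguments box_ess {R}.
Arguments line_causal {R}.
Arguments line_length {R}.
Arguments causal_mono {R}.
Arguments sigma_spacelike {R}.
Arguments sigma_timelike {R}.
Arguments spc {R}.
Arguments tml {R}.
Arguments spc_of {R}.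
Arguments tml_of {R}.
Arguments good {R}.
Arguments core {R}.

Section S2.
Variable R : realType.
Lemma spcN (a b : R) : spc (- a) b = spc a b.
Proof. by rewrite /spc sqrrN. Qed.
Lemma tmlN (a b m : R) : tml (- a) b m <-> tml a b m.
Proof. by rewrite /tml sqrrN. Qed.

Lemma good_sym (t1 p t2 q m tc sc r : R) : good t1 p t2 q m tc sc r -> good t2 q t1 p m tc sc r.
Proof.
case=> r0 h1 h2 H; split => // zt zs a b.
by case: (H zt zs a b) => -[u v]; [right|left].
Qed.

Lemma good_neg (t1 p t2 q m tc sc r : R) : good (- t1) p (- t2) q m tc sc r -> good t1 p t2 q m (- tc) sc r.
Proof.
case=> r0 h1 h2 H; split; try lra.
move=> zt zs a b.
have a' : `|- zt - tc| < r by rewrite (_ : - zt - tc = - (zt - - tc)) ?normrN //; ring.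
have e1 : - zt - - t1 = - (zt - t1) by ring.
have e2 : - zt - - t2 = - (zt - t2) by ring.
case: (H (- zt) zs a' b); rewrite e1 e2 !spcN !tmlN => -[u v]; [left|right]; by [].
Qed.

Lemma core_pos (t1 p t2 q : R) : -1 <= t1 <= 1 -> -1 <= t2 <= 1 ->
  0 < q - p <= 1/64 ->
  exists tc sc r, good t1 p t2 q ((q - p) / 16) tc sc r.
Proof.
move=> /andP[a1 a2] /andP[b1 b2] /andP[d0 d1].
have m0 : 0 < (q - p) / 16 by lra.
have m1 : (q - p) / 16 <= (q - p) / 16 by [].
have m2 : (q - p) / 16 <= 1/64 by lra.
have [t10|t10] := leP t1 0.
  apply: core => //; apply/andP; split => //.
have := @core R (- t1) p (- t2) q ((q - p) / 16).
case.
- apply/andP; split; lra.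
- apply/andP; split; lra.
- by apply/andP; split.
- by [].
- by [].
- by [].
move=> tc [sc [r G]]; exists (- tc), sc, r; exact: good_neg.
Qed.

Lemma core2 (t1 p t2 q : R) : -1 <= t1 <= 1 -> -1 <= t2 <= 1 ->
  0 < `|q - p| <= 1/64 ->
  exists tc sc r, good t1 p t2 q (`|q - p| / 16) tc sc r.
Proof.
move=> h1 h2 /andP[d0 d1].
have [pq|qp] := ltP p q.
  rewrite gtr0_norm ?subr_gt0 //; apply: core_pos => //.
  by rewrite subr_gt0 pq /= -(gtr0_norm (_ : 0 < q - p)) // subr_gt0.
have qp' : q < p.
  rewrite lt_neqAle qp andbT; apply/eqP => e; move: d0; by rewrite e subrr normr0 ltxx.
have e : `|q - p| = p - q by rewrite distrC gtr0_norm // subr_gt0.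
rewrite e in d1 *.
have := @core_pos t2 q t1 p h2 h1.
case; first by rewrite subr_gt0 qp' /=.
move=> tc [sc [r G]]; exists tc, sc, r.
exact: good_sym.
Qed.

Lemma dN_lower (x y : R * R) : Xset x -> Xset y -> 0 < `|y.2 - x.2| <= 1/64 ->
  ((Num.sqrt (`|y.2 - x.2| / 16))%:E <= dN x y)%E.
Proof.
move=> Xx Xy hd.
have [tc [sc [r [r0 h1 h2 H]]]] := core2 (x.1) (x.2) (y.1) (y.2) Xx Xy hd.
rewrite /dN; apply: (box_ess _ _ _ _ _ r0 h1 h2) => z a b /=.
have Xz : Xset z.
  by move: a; rewrite /Xset ltr_distl => /andP[a1 a2]; apply/andP; split; lra.
case: (H z.1 z.2 a b) => -[S [T1 T2]].
  rewrite (sigma_spacelike x z S) abse0 sub0e abseN abse_id.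
  apply: le_trans (sigma_timelike y z Xy Xz T1).
  by rewrite lee_fin; apply: ler_wsqrtr.
rewrite (sigma_spacelike y z S) abse0 sube0 abse_id.
apply: le_trans (sigma_timelike x z Xx Xz T1).
by rewrite lee_fin; apply: ler_wsqrtr.
Qed.
End S2.

Arguments dN_lower {R}.

Section S3.
Variable R : realType.

Lemma snd_within (c : R -> R * R) (A : set R) :
  {within A, continuous c} -> {within A, continuous (fun u => (c u).2)}.
Proof.
move=> hc x.
have := @continuous_comp _ _ _ _ snd x (hc x).
by apply; exact: cvg_snd.
Qed.


Definition lv (s : R -> R) (N : nat) (i : nat) : R :=
  s 0 + i%:R * ((s 1 - s 0) / N%:R).

Lemma lvS (s : R -> R) (N i : nat) : lv s N i.+1 = lv s N i + (s 1 - s 0) / N%:R.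
Proof. by rewrite /lv -natr1; ring. Qed.

Lemma lvN (s : R -> R) (N : nat) : (0 < N)%N -> lv s N N = s 1.
Proof.
move=> N0; rewrite /lv mulrCA mulfV ?mulr1; first by ring.
by rewrite pnatr_eq0 -lt0n.
Qed.

Lemma lv0 (s : R -> R) (N : nat) : lv s N 0 = s 0.
Proof. by rewrite /lv mul0r addr0. Qed.

Lemma lv_between (s : R -> R) (N k : nat) : (k < N)%N ->
  Num.min (lv s N k) (s 1) <= lv s N k.+1 <= Num.max (lv s N k) (s 1).
Proof.
move=> kN; have N0 : (0 < N)%N by apply: leq_ltn_trans kN.
have NR : (0 : R) < N%:R by rewrite ltr0n.
have kR : (k.+1)%:R <= (N%:R : R) by rewrite ler_nat.
rewrite -(lvN s N N0) lvS /lv.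
set d := (s 1 - s 0) / N%:R.
have [d0|d0] := leP 0 d.
  rewrite ge_min le_max; apply/andP; split; apply/orP; [left|right]; first lra.
  rewrite -natr1 in kR; nra.
rewrite ge_min le_max; apply/andP; split; apply/orP; [right|left]; last lra.
rewrite -natr1 in kR; nra.
Qed.

Lemma partition (s : R -> R) (N : nat) : (0 < N)%N ->
  {within `[0, 1], continuous s} -> s 0 != s 1 ->
  exists t : nat -> R, [/\ t 0%N = 0, t N = 1,
    (forall i, (i < N)%N -> t i < t i.+1) &
    (forall i, (i <= N)%N -> 0 <= t i <= 1 /\ s (t i) = lv s N i)].
Proof.
move=> N0 hc sne.
have NR : (0 : R) < N%:R by rewrite ltr0n.
have dne : (s 1 - s 0) / N%:R != 0.
  by rewrite mulf_eq0 negb_or subr_eq0 eq_sym sne /= invr_eq0 pnatr_eq0 -lt0n.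
have build : forall k, (k < N)%N -> exists t : nat -> R, [/\ t 0%N = 0,
    (forall i, (i <= k)%N -> 0 <= t i <= 1 /\ s (t i) = lv s N i) &
    (forall i, (i < k)%N -> t i < t i.+1)].
  elim => [|k IH] hk.
    exists (fun _ => 0); split => // i; rewrite leqn0 => /eqP ->.
    by rewrite lv0 lexx ler01.
  have [t [t0 tv ti]] := IH (ltnW hk).
  have [/andP[tk0 tk1] stk] := tv k (leqnn k).
  have := @IVT R s (t k) 1 (lv s N k.+1) tk1.
  case.
  - apply: continuous_subspaceW hc => u /=; rewrite !in_itv /= => /andP[a b].
    by apply/andP; split => //; apply: le_trans a.
  - by rewrite stk; exact: (@lv_between s N k (ltnW hk)).
  move=> b; rewrite in_itv /= => /andP[bk b1] sb.
  have tkb : t k < b.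
    rewrite lt_neqAle bk andbT; apply/eqP => e.
    move: sb; rewrite -e stk lvS => h; move/eqP: dne; apply; lra.
  exists (fun i => if i == k.+1 then b else t i); split => //.
    move=> i; rewrite leq_eqVlt => /orP[/eqP ->|]; first by rewrite eqxx sb (le_trans tk0 bk) b1.
    by rewrite ltnS => ik; rewrite (ltn_eqF (leq_ltn_trans ik (ltnSn k))); apply: tv.
  move=> i; rewrite ltnS leq_eqVlt => /orP[/eqP ->|ik]; first by rewrite eqxx (ltn_eqF (ltnSn k)).
  have e1 : (i == k.+1) = false by apply/eqP; lia.
  have e2 : (i.+1 == k.+1) = false by apply/eqP; lia.
  rewrite e1 e2; exact: ti.
have hN1 : (N.-1 < N)%N by lia.
have [t [t0 tv ti]] := build N.-1 hN1.
have [/andP[tl0 tl1] stl] := tv N.-1 (leqnn _).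
have tl : t N.-1 < 1.
  rewrite lt_neqAle tl1 andbT; apply/eqP => e.
  have h2 := lvS s N N.-1; rewrite prednK // lvN // in h2.
  move: stl; rewrite e => h.
  by move/eqP: dne; apply; lra.
exists (fun i => if i == N then 1 else t i); split.
- by rewrite (_ : (0 == N) = false) //; apply/eqP; lia.
- by rewrite eqxx.
- move=> i iN /=; rewrite (_ : (i == N) = false); last by apply/eqP; lia.
  have [e|ne] := eqVneq i.+1 N.
    by have -> : i = N.-1 by lia.
  apply: ti; lia.
- move=> i; rewrite leq_eqVlt => /orP[/eqP ->|iN].
    by rewrite eqxx lvN // ler01 lexx.
  rewrite (_ : (i == N) = false); last by apply/eqP; lia.
  apply: tv; lia.
Qed.
End S3.
Arguments snd_within {R}. Arguments partition {R}. Arguments lvS {R}. Arguments lv {R}.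

Theorem theorem3 (R : realType) (c : R -> R * R) :
  {within `[0, 1]%classic, continuous c} ->
  (forall u : R, 0 <= u <= 1 -> Xset (c u)) ->
  (c 0).2 != (c 1).2 ->
  ~ dN_rectifiable c.
Proof.
move=> hc hX hne [M HM].
pose s := fun u : R => (c u).2.
have hs : {within `[0, 1], continuous s} := snd_within _ _ hc.
pose D := `|s 1 - s 0|.
have D0 : 0 < D by rewrite normr_gt0 subr_eq0 eq_sym.
have sqD0 : 0 < Num.sqrt D by rewrite sqrtr_gt0.
pose k := (Num.truncn (4 * `|M| / Num.sqrt D + 64 * D)).+1.
have kgt : 4 * `|M| / Num.sqrt D + 64 * D < k%:R := truncnS_gt _.
have kR0 : (0 : R) < k%:R by rewrite ltr0n.
pose N := (k * k)%N.
have N0 : (0 < N)%N by rewrite muln_gt0 /k.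
have NR : (N%:R : R) = k%:R * k%:R by rewrite natrM.
have kN : (k%:R : R) <= N%:R.
  by rewrite NR -{1}(mulr1 k%:R) ler_pM2l // ler1n /k.
have [t [t0 tN ti tv]] := partition _ _ N0 hs hne.
have := HM N t t0 tN ti.
apply/negP; rewrite -ltNge.
have step : forall i, (i < N)%N ->
    ((Num.sqrt (D / N%:R / 16))%:E <= dN (c (t i)) (c (t i.+1)))%E.
  move=> i iN.
  have [/andP[a0 a1] sa] := tv i (ltnW iN).
  have [/andP[b0 b1] sb] := tv i.+1 iN.
  have e : `|(c (t i.+1)).2 - (c (t i)).2| = D / N%:R.
    rewrite -/(s (t i.+1)) -/(s (t i)) sa sb lvS.
    rewrite (_ : _ + _ - _ = (s 1 - s 0) / N%:R); last by ring.
    by rewrite normrM normfV (ger0_norm (ler0n _ _)).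
  rewrite -e; apply: dN_lower; [apply: hX; lra | apply: hX; lra | rewrite e; apply/andP; split].
    by apply: divr_gt0 => //; rewrite ltr0n.
  rewrite ler_pdivrMr ?ltr0n //.
  have : 0 <= 4 * `|M| / Num.sqrt D by apply: divr_ge0; [rewrite mulr_ge0 | apply: ltW].
  lra.
have H2 : (\sum_(i < N) (Num.sqrt (D / N%:R / 16))%:E <=
           \sum_(i < N) dN (c (t i)) (c (t i.+1)))%E.
  by apply: lee_sum => i _; exact: step.
apply: lt_le_trans H2.
rewrite sumEFin sumr_const card_ord lte_fin.
have e1 : D / N%:R / 16 = D * (1 / (4 * k%:R)) ^+ 2.
  by rewrite NR; field; rewrite gt_eqF.
rewrite e1 sqrtrM ?ltW // sqrtr_sqr ger0_norm; last by apply: divr_ge0; lra.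
rewrite -[_ *+ N]mulr_natr NR.
have : 4 * `|M| < k%:R * Num.sqrt D.
  rewrite -ltr_pdivrMr //; apply: le_lt_trans kgt; lra.
have := ler_norm M.
have -> : Num.sqrt D * (1 / (4 * k%:R)) * (k%:R * k%:R) = k%:R * Num.sqrt D / 4.
  by field; rewrite gt_eqF.
lra.
Qed.
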